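(* The graph $\{(x_1,\dots,x_n,y)\in\mathbb R^{n+1}: y=x_1^2+\cdots+x_n^2\}$ (with the metric induced from $\mathbb R^{n+1}$) is $\Phi$-SSU if and only if $n>4$.
   Context: A Riemannian $n$-manifold $N$ is $\Phi$-SSU if there is an isometric immersion $N\to\mathbb R^q$ with second fundamental form $\mathsf B$ such that for every $y\in N$ and every unit $\mathsf x\in T_yN$, $\sum_{\beta=1}^n\big(4|\mathsf B(\mathsf x,\mathsf e_\beta)|^2-\langle \mathsf B(\mathsf x,\mathsf x),\mathsf B(\mathsf e_\beta,\mathsf e_\beta)\rangle\big)<0$, where $\{\mathsf e_\beta\}$ is an orthonormal basis of $T_yN$. *)

(* Defs.v *)
From HB Require Import structures.
From mathcomp Require Import all_boot all_order all_algebra.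
From mathcomp Require Import all_classical all_reals all_analysis.
Set Implicit Arguments. Unset Strict Implicit. Unset Printing Implicit Defensive.
Import Order.TTheory GRing.Theory Num.Theory.
Import numFieldNormedType.Exports.
Local Open Scope ring_scope.

Section SSU.
Variable R : realType.

Definition dotv (k : nat) (u v : 'rV[R]_k) : R := (u *m v^T) ord0 ord0.
Definition sqnorm (k : nat) (u : 'rV[R]_k) : R := dotv u u.

Fixpoint iderive (m k : nat) (vs : seq 'rV[R]_m) (f : 'rV[R]_m -> 'rV[R]_k)
  : 'rV[R]_m -> 'rV[R]_k :=
  match vs with
  | [::] => f
  | v :: vs' => fun a => 'D_v (iderive vs' f) a
  end.

Definition smooth (m k : nat) (f : 'rV[R]_m -> 'rV[R]_k) : Prop :=
  (forall (vs : seq 'rV[R]_m) (v a : 'rV[R]_m), derivable (iderive vs f) a v) /\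
  (forall vs : seq 'rV[R]_m, continuous (iderive vs f)).

Definition jac (m k : nat) (f : 'rV[R]_m -> 'rV[R]_k) (a : 'rV[R]_m) : 'M[R]_(m, k) :=
  \matrix_(i < m, j < k) ('D_(delta_mx ord0 i) f a) ord0 j.

(* Pull-back metric (Gram matrix) of f at a: g(u,v) = u *m gram f a *m v^T. *)
Definition gram (m k : nat) (f : 'rV[R]_m -> 'rV[R]_k) (a : 'rV[R]_m) : 'M[R]_m :=
  jac f a *m (jac f a)^T.

(* The paraboloid graph y = x_1^2 + ... + x_n^2 in R^(n+1), as the global
   parametrization x |-> (x, |x|^2). *)
Definition paraboloid (n : nat) (x : 'rV[R]_n) : 'rV[R]_(n + 1) :=
  row_mx x (const_mx (\sum_(i < n) x ord0 i ^+ 2)).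

(* Normal component of w in R^k w.r.t. the tangent space = row space of J
   (J of full row rank): w minus its orthogonal projection onto rowspace J. *)
Definition normal_part (m k : nat) (J : 'M[R]_(m, k)) (w : 'rV[R]_k) : 'rV[R]_k :=
  w - w *m J^T *m invmx (J *m J^T) *m J.

Definition sff (m k : nat) (G : 'rV[R]_m -> 'rV[R]_k) (a u v : 'rV[R]_m) : 'rV[R]_k :=
  normal_part (jac G a) ('D_u ('D_v G) a).

(* G : R^n -> R^q is an isometric immersion of (R^n, metric pulled back by phi),
   i.e. G o phi^{-1} is an isometric immersion of the image manifold. *)
Definition isometric_immersion (m p k : nat) (phi : 'rV[R]_m -> 'rV[R]_p)
  (G : 'rV[R]_m -> 'rV[R]_k) : Prop :=
  smooth G /\ forall a, gram G a = gram phi a.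

(* Phi-SSU for the Riemannian manifold parametrized (globally, diffeomorphically)
   by phi : R^m -> R^p with the induced metric. Tangent vectors at phi a are
   represented by coordinate vectors u, with metric u *m gram phi a *m v^T;
   an orthonormal basis is a matrix E with E g E^T = 1. *)
Definition PhiSSU (m p : nat) (phi : 'rV[R]_m -> 'rV[R]_p) : Prop :=
  exists (q : nat) (G : 'rV[R]_m -> 'rV[R]_q),
    isometric_immersion phi G /\
    forall (a u : 'rV[R]_m) (E : 'M[R]_m),
      (u *m gram phi a *m u^T) ord0 ord0 = 1 ->
      E *m gram phi a *m E^T = 1%:M ->
      \sum_(b < m) (4 * sqnorm (sff G a u (row b E))
                     - dotv (sff G a u u) (sff G a (row b E) (row b E))) < 0.

End SSU.

(* Main.v *)
Require Import Defs.
From mathcomp Require Import all_boot all_order all_algebra.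
From mathcomp Require Import all_classical all_reals all_analysis.
From HB Require Import structures.
From mathcomp Require Import ring lra.
Set Implicit Arguments. Unset Strict Implicit. Unset Printing Implicit Defensive.
Import Order.TTheory GRing.Theory Num.Theory.
Import numFieldNormedType.Exports.
Local Open Scope ring_scope.
Local Open Scope classical_set_scope.

Section S.
Variable R : realType.

Lemma dotvE k (u v : 'rV[R]_k) : dotv u v = \sum_j u ord0 j * v ord0 j.
Proof. by rewrite /dotv mxE; apply: eq_bigr => j _; rewrite mxE. Qed.

Lemma dotvC k (u v : 'rV[R]_k) : dotv u v = dotv v u.
Proof. by rewrite !dotvE; apply: eq_bigr => j _; rewrite mulrC. Qed.

Lemma dotvDl k (u v w : 'rV[R]_k) : dotv (u + v) w = dotv u w + dotv v w.
Proof. by rewrite !dotvE -big_split; apply: eq_bigr => j _; rewrite mxE mulrDl. Qed.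

Lemma dotvDr k (u v w : 'rV[R]_k) : dotv w (u + v) = dotv w u + dotv w v.
Proof. by rewrite dotvC dotvDl !(dotvC w). Qed.

Lemma dotvZl k a (u w : 'rV[R]_k) : dotv (a *: u) w = a * dotv u w.
Proof. by rewrite !dotvE mulr_sumr; apply: eq_bigr => j _; rewrite mxE mulrA. Qed.

Lemma dotvZr k a (u w : 'rV[R]_k) : dotv w (a *: u) = a * dotv w u.
Proof. by rewrite dotvC dotvZl dotvC. Qed.

Lemma dotvNl k (u w : 'rV[R]_k) : dotv (- u) w = - dotv u w.
Proof. by rewrite -scaleN1r dotvZl mulN1r. Qed.

Lemma dotvBl k (u v w : 'rV[R]_k) : dotv (u - v) w = dotv u w - dotv v w.
Proof. by rewrite dotvDl dotvNl. Qed.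

Lemma dotv0r k (u : 'rV[R]_k) : dotv u 0 = 0.
Proof. by rewrite dotvE big1 // => j _; rewrite mxE mulr0. Qed.

Lemma dotv_ge0 k (u : 'rV[R]_k) : 0 <= dotv u u.
Proof. by rewrite dotvE sumr_ge0 // => j _; rewrite -expr2 sqr_ge0. Qed.

Lemma dotv_eq0 k (u : 'rV[R]_k) : dotv u u = 0 -> u = 0.
Proof.
rewrite dotvE => /psumr_eq0P H; apply/rowP => j; rewrite mxE.
have := H (fun i _ => (ltac:(by rewrite -expr2 sqr_ge0) : 0 <= u ord0 i * u ord0 i)) j isT.
move/eqP; rewrite -expr2 sqrf_eq0 => /eqP.
by rewrite ord1.
Qed.

Lemma derive_quot (V W : normedModType R) (f : V -> W) a v D Q :
 (forall h : R, h != 0 -> h^-1 *: (f (h *: v + a) - f a) = D + h *: Q) ->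
 derivable f a v /\ 'D_v f a = D.
Proof.
move=> H.
have cv : (fun h => h^-1 *: ((f \o shift a) (h *: v) - f a)) @ 0^' --> D.
  apply: (@cvg_trans _ ((fun h : R => D + h *: Q) @ 0^')).
    apply: near_eq_cvg; near=> h; rewrite /= H //.
    near: h; exact: nbhs_dnbhs_neq.
  apply: cvg_within_filter.
  have := cvgD (cvg_cst D) (@cvgZr_tmp _ _ _ (nbhs (0:R)) _ (fun h : R => h) 0 Q cvg_id).
  by rewrite scale0r addr0; apply; apply: nbhs_filter.
split; first by apply/cvg_ex; exists D; exact: cv.
exact: cvg_lim.
Unshelve. all: by end_near. Qed.

Lemma cont_sum (T : topologicalType) (V : normedModType R) (I : Type) (r : seq I)
  (F : I -> T -> V) : (forall i, continuous (F i)) ->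
  continuous (fun x => \sum_(i <- r) F i x).
Proof.
move=> H; elim: r => [|i r IH].
  under eq_fun do rewrite big_nil. exact: cst_continuous.
under eq_fun do rewrite big_cons.
by move=> x; apply: (continuousD (H i x) (IH x)).
Qed.

Lemma mx_cont (T : topologicalType) m k (f : T -> 'M[R]_(m,k)) :
  (forall i j, continuous (fun x => f x i j)) -> continuous f.
Proof.
move=> H.
have -> : f = fun x => \sum_i \sum_j (f x i j) *: delta_mx i j.
  by apply: funext => x; rewrite [LHS]matrix_sum_delta.
apply: cont_sum => i; apply: cont_sum => j.
by move=> x; apply: continuousZr_tmp; apply: H.
Qed.

Lemma coord_cont m k i j : continuous (fun x : 'M[R]_(m,k) => x i j).
Proof. exact: coord_continuous. Qed.

Lemma dotv_cont k (w : 'rV[R]_k) : continuous (fun x : 'rV[R]_k => dotv x w).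
Proof.
under eq_fun do rewrite dotvE.
apply: cont_sum => j x; apply: continuousM; first exact: coord_cont.
exact: cst_continuous.
Qed.

Lemma dotvv_cont k : continuous (fun x : 'rV[R]_k => dotv x x).
Proof.
under eq_fun do rewrite dotvE.
by apply: cont_sum => j x; apply: continuousM; exact: coord_cont.
Qed.

Lemma mulmx_cont m k p (M : 'M[R]_(k,p)) i j : continuous (fun x : 'M[R]_(m,k) => (x *m M) i j).
Proof.
under eq_fun do rewrite mxE.
apply: cont_sum => l x; apply: continuousM; first exact: coord_cont.
exact: cst_continuous.
Qed.

Lemma contD' (T : topologicalType) (f g : T -> R) :
  continuous f -> continuous g -> continuous (fun x => f x + g x).
Proof. by move=> hf hg x; apply: (continuousD (hf x) (hg x)). Qed.

Lemma contM' (T : topologicalType) (f g : T -> R) :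
  continuous f -> continuous g -> continuous (fun x => f x * g x).
Proof. by move=> hf hg x; apply: (continuousM (hf x) (hg x)). Qed.

Definition PQ n (a : 'rV[R]_n) (M : 'M[R]_n) (c : R) (w : 'rV[R]_n) (k : R)
  (x : 'rV[R]_n) : 'rV[R]_(n + 1) :=
  row_mx (a + x *m M) (const_mx (c + dotv x w + k * dotv x x)).

Lemma PQ_derive n a M c w k (x v : 'rV[R]_n) :
  derivable (PQ a M c w k) x v /\
  'D_v (PQ a M c w k) x = PQ (v *m M) 0 (dotv v w) ((2 * k) *: v) 0 x.
Proof.
apply: (@derive_quot _ _ _ _ _ _ (row_mx 0 (const_mx (k * dotv v v)))) => h h0.
rewrite /PQ opp_row_mx !add_row_mx !scale_row_mx add_row_mx; congr row_mx.
  rewrite mulmx0 scaler0 !addr0 mulmxDl -scalemxAl.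
  by rewrite addrCA addrK scalerA mulVf // scale1r.
apply/rowP => j; rewrite !mxE.
rewrite !(dotvDl, dotvDr, dotvZl, dotvZr) (dotvC v x) (dotvC v w).
by field.
Qed.

Lemma PQ_cont n a M c w k : continuous (@PQ n a M c w k).
Proof.
apply: mx_cont => i j; rewrite /PQ.
case: (split_ordP j) => j' ->.
  under eq_fun do rewrite row_mxEl mxE.
  apply: contD'; first exact: cst_continuous.
  exact: mulmx_cont.
under eq_fun do rewrite row_mxEr mxE.
apply: contD'; first apply: contD'.
- exact: cst_continuous.
- exact: dotv_cont.
apply: contM'; first exact: cst_continuous.
exact: dotvv_cont.
Qed.

Lemma paraboloidE n : @paraboloid R n = PQ 0 1%:M 0 0 1.
Proof.
apply: funext => x; rewrite /paraboloid /PQ add0r mulmx1 dotv0r add0r mul1r.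
congr row_mx; apply/rowP => j; rewrite !mxE dotvE.
by rewrite add0r; apply: eq_bigr => l _; rewrite expr2.
Qed.

Lemma iderive_PQ n (vs : seq 'rV[R]_n) :
  exists a M c w k, iderive vs (@paraboloid R n) = PQ a M c w k.
Proof.
elim: vs => [|v vs [a [M [c [w [k IH]]]]]].
  by exists 0, 1%:M, 0, 0, 1; rewrite paraboloidE.
exists (v *m M), 0, (dotv v w), ((2 * k) *: v), 0 => /=.
by rewrite IH; apply: funext => x; case: (PQ_derive a M c w k x v).
Qed.

Lemma smooth_paraboloid n : smooth (@paraboloid R n).
Proof.
split.
  by move=> vs v x; have [a [M [c [w [k ->]]]]] := iderive_PQ vs; case: (PQ_derive a M c w k x v).
by move=> vs; have [a [M [c [w [k ->]]]]] := iderive_PQ vs; exact: PQ_cont.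
Qed.


Lemma xxT n (x : 'rV[R]_n) : x *m x^T = (dotv x x)%:M.
Proof. by apply/matrixP => i j; rewrite !ord1 [RHS]mxE eqxx mulr1n. Qed.

Lemma dotv_row p q (a c : 'rV[R]_p) (b d : 'rV[R]_q) :
  dotv (row_mx a b) (row_mx c d) = dotv a c + dotv b d.
Proof. by rewrite /dotv tr_row_mx mul_row_col mxE. Qed.

Lemma dotv_delta n (x : 'rV[R]_n) i : dotv x (delta_mx 0 i) = x ord0 i.
Proof. by rewrite /dotv trmx_delta -colE mxE. Qed.

Lemma split_lshift m p (j : 'I_m) : fintype.split (lshift p j) = inl j.
Proof. exact: (unsplitK (inl _ j)). Qed.
Lemma split_rshift m p (j : 'I_p) : fintype.split (rshift m j) = inr j.
Proof. exact: (unsplitK (inr _ j)). Qed.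

Definition Jm n (x : 'rV[R]_n) : 'M[R]_(n, n + 1) := row_mx 1%:M (2 *: x^T).
Definition gm n (x : 'rV[R]_n) : 'M[R]_n := 1%:M + 4 *: (x^T *m x).
Definition sx n (x : 'rV[R]_n) : R := 1 + 4 * dotv x x.
Definition Ginv n (x : 'rV[R]_n) : 'M[R]_n := 1%:M - (4 / sx x) *: (x^T *m x).
Definition Nv n (x : 'rV[R]_n) : 'rV[R]_(n + 1) := row_mx (-2 *: x) (const_mx 1).

Lemma sx_gt0 n (x : 'rV[R]_n) : 0 < sx x.
Proof. by rewrite /sx; have := dotv_ge0 x; lra. Qed.

Lemma D_par n (x v : 'rV[R]_n) :
  'D_v (@paraboloid R n) x = row_mx v (const_mx (2 * dotv x v)).
Proof.
rewrite paraboloidE; case: (PQ_derive 0 1%:M 0 0 1 x v) => _ ->.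
rewrite /PQ mulmx1 mulmx0 addr0 dotv0r; congr row_mx.
by apply/rowP => j; rewrite !mxE dotvZr; ring.
Qed.

Lemma jac_par n (x : 'rV[R]_n) : jac (@paraboloid R n) x = Jm x.
Proof.
apply/matrixP => i j; rewrite /jac /Jm mxE D_par.
case: (split_ordP j) => j' ->.
  by rewrite !row_mxEl !mxE eq_sym.
rewrite !row_mxEr !mxE dotv_delta; congr (_ * x _ _); by rewrite (ord1 j').
Qed.

Lemma gram_par n (x : 'rV[R]_n) : gram (@paraboloid R n) x = gm x.
Proof.
rewrite /gram jac_par /Jm /gm tr_row_mx mul_row_col trmx1 mulmx1 linearZ /= trmxK.
by rewrite -scalemxAl -scalemxAr scalerA -natrM.
Qed.

Lemma XX n (x : 'rV[R]_n) :
  (x^T *m x) *m (x^T *m x) = dotv x x *: (x^T *m x).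
Proof. by rewrite mulmxA -(mulmxA x^T x) xxT mul_mx_scalar -scalemxAl. Qed.

Lemma gm_Ginv n (x : 'rV[R]_n) : gm x *m Ginv x = 1%:M.
Proof.
rewrite /gm /Ginv mulmxDl mul1mx mulmxBr mulmx1 -scalemxAl -scalemxAr XX.
rewrite !scalerA -addrA -scalerBl -scaleNr -scalerDl.
have -> : - (4 / sx x) + (4 - 4 * (4 / sx x) * dotv x x) = 0.
  have := sx_gt0 x; rewrite /sx => h; field; lra.
by rewrite scale0r addr0.



Qed.

Lemma Ginv_gm n (x : 'rV[R]_n) : Ginv x *m gm x = 1%:M.
Proof. exact/mulmx1C/gm_Ginv. Qed.

Lemma gm_unit n (x : 'rV[R]_n) : gm x \in unitmx.
Proof. by case: (mulmx1_unit (gm_Ginv x)). Qed.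

Lemma x_invg n (x : 'rV[R]_n) : x *m invmx (gm x) = (sx x)^-1 *: x.
Proof.
have xg : x *m gm x = sx x *: x.
  rewrite /gm /sx mulmxDr mulmx1 -scalemxAr mulmxA xxT mul_scalar_mx scalerA.
  by rewrite scalerDl scale1r mulrC.
have h := sx_gt0 x.
apply: (@scalerI _ _ (sx x)); first by rewrite gt_eqF.
rewrite scalerA mulfV ?gt_eqF // scale1r scalemxAl -xg mulmxK //.
exact: gm_unit.
Qed.

Lemma D2_par n (x u v : 'rV[R]_n) :
  'D_u ('D_v (@paraboloid R n)) x = row_mx 0 (const_mx (2 * dotv u v)).
Proof.
have -> : 'D_v (@paraboloid R n) = PQ (v *m 1%:M) 0 (dotv v 0) ((2 * 1) *: v) 0.
  by rewrite paraboloidE; apply: funext => y; case: (PQ_derive 0 1%:M 0 0 1 y v).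
case: (PQ_derive (v *m 1%:M) 0 (dotv v 0) ((2 * 1) *: v) 0 x u) => _ ->.
rewrite /PQ !mulmx0 addr0; congr row_mx.
by apply/rowP => j; rewrite !mxE !dotvZr; ring.
Qed.

Lemma sff_par n (x u v : 'rV[R]_n) :
  sff (@paraboloid R n) x u v = (2 * dotv u v / sx x) *: Nv x.
Proof.
rewrite /sff /normal_part D2_par jac_par.
have -> : Jm x *m (Jm x)^T = gm x.
  by rewrite -gram_par /gram jac_par.
have -> : row_mx 0 (const_mx (2 * dotv u v)) *m (Jm x)^T = (2 * (2 * dotv u v)) *: x.
  rewrite /Jm tr_row_mx mul_row_col mul0mx add0r linearZ /= trmxK.
  by apply/rowP => j; rewrite !mxE big_ord1 !mxE; ring.
rewrite -scalemxAl x_invg scalerA -scalemxAl /Jm mul_mx_row mulmx1 -scalemxAr xxT.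
have h := sx_gt0 x.
rewrite /Nv; apply/rowP => j; case: (split_ordP j) => j' ->.
  rewrite !mxE split_lshift !mxE; field; lra.
rewrite !mxE split_rshift !mxE !ord1 eqxx mulr1n /sx; field.
by rewrite /sx in h; lra.
Qed.

Lemma dotvNN n (x : 'rV[R]_n) : dotv (Nv x) (Nv x) = sx x.
Proof.
rewrite /Nv dotv_row dotvZl dotvZr /sx !dotvE big_ord1 !mxE; ring.
Qed.


Lemma dotvBr k (u v w : 'rV[R]_k) : dotv w (u - v) = dotv w u - dotv w v.
Proof. by rewrite dotvC dotvBl !(dotvC w). Qed.

Lemma uwT k (u w : 'rV[R]_k) : u *m w^T = (dotv u w)%:M.
Proof. by apply/matrixP => i j; rewrite !ord1 [RHS]mxE eqxx mulr1n. Qed.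

Lemma dot_row_E n (u : 'rV[R]_n) (E : 'M[R]_n) b :
  dotv u (row b E) = (u *m E^T) ord0 b.
Proof. by rewrite dotvE !mxE; apply: eq_bigr => j _; rewrite !mxE. Qed.

Lemma sum_sq_dot n (u : 'rV[R]_n) (E : 'M[R]_n) :
  \sum_b (dotv u (row b E)) ^+ 2 = (u *m (E^T *m E) *m u^T) ord0 ord0.
Proof.
have -> : u *m (E^T *m E) *m u^T = (u *m E^T) *m (u *m E^T)^T.
  by rewrite trmx_mul trmxK !mulmxA.
rewrite -/(dotv (u *m E^T) (u *m E^T)) dotvE.
by apply: eq_bigr => b _; rewrite dot_row_E expr2.
Qed.

Lemma sum_sq_row n (E : 'M[R]_n) :
  \sum_b dotv (row b E) (row b E) = \tr (E^T *m E).
Proof.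
rewrite /mxtrace; under [RHS]eq_bigr do rewrite mxE.
rewrite exchange_big; apply: eq_bigr => b _; rewrite dotvE.
by apply: eq_bigr => j _; rewrite !mxE.
Qed.

Lemma EtE n (a : 'rV[R]_n) (E : 'M[R]_n) :
  E *m gm a *m E^T = 1%:M -> E^T *m E = Ginv a.
Proof.
move=> h; have h1 : E *m (gm a *m E^T) = 1%:M by rewrite mulmxA.
have h2 := mulmx1C h1.
by rewrite -[Ginv a]mulmx1 -h2 !mulmxA Ginv_gm mul1mx.
Qed.

Lemma uAu n (u x : 'rV[R]_n) :
  u *m (x^T *m x) *m u^T = (dotv u x ^+ 2)%:M.
Proof.
rewrite mulmxA -mulmxA uwT (uwT x u) mul_scalar_mx scale_scalar_mx.
by rewrite dotvC expr2.
Qed.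

Lemma uGinvu n (u a : 'rV[R]_n) :
  (u *m Ginv a *m u^T) ord0 ord0 = dotv u u - 4 / sx a * dotv u a ^+ 2.
Proof.
rewrite /Ginv mulmxBr mulmx1 mulmxBl -scalemxAr -scalemxAl uAu uwT.
by rewrite !mxE eqxx !mulr1n.
Qed.

Lemma ugmu n (u a : 'rV[R]_n) :
  (u *m gm a *m u^T) ord0 ord0 = dotv u u + 4 * dotv u a ^+ 2.
Proof.
rewrite /gm mulmxDr mulmx1 mulmxDl -scalemxAr -scalemxAl uAu uwT.
by rewrite !mxE eqxx !mulr1n.
Qed.

Lemma trGinv n (a : 'rV[R]_n) : \tr (Ginv a) = n%:R - 4 / sx a * dotv a a.
Proof.
rewrite /Ginv linearB linearZ /= mxtrace1 mxtrace_mulC xxT mxtrace_scalar.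
by [].
Qed.

Lemma if_dir n (hn : (4 < n)%N) : PhiSSU (@paraboloid R n).
Proof.
exists (n + 1)%N, (@paraboloid R n); split.
  by split; [exact: smooth_paraboloid | ].
move=> a u E; rewrite gram_par => hu hE.
set s := sx a.
have hs : 0 < s := sx_gt0 a.
have term : forall b, 4 * sqnorm (sff (@paraboloid R n) a u (row b E)) -
    dotv (sff (@paraboloid R n) a u u) (sff (@paraboloid R n) a (row b E) (row b E))
    = 4 / s * (4 * dotv u (row b E) ^+ 2 - dotv u u * dotv (row b E) (row b E)).
  move=> b; rewrite /sqnorm !sff_par !dotvZl !dotvZr dotvNN -/s.
  field; lra.
under eq_bigr do rewrite term.
rewrite -mulr_sumr pmulr_rlt0; last by apply: divr_gt0.
rewrite sumrB -mulr_sumr -mulr_sumr sum_sq_dot sum_sq_row (EtE hE) uGinvu trGinv -/s.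
rewrite ugmu in hu.
have hA : 0 < dotv u u.
  rewrite lt_def dotv_ge0 andbT; apply/eqP => /dotv_eq0 u0.
  have h1 : dotv u a = 0 by rewrite u0 dotvC dotv0r.
  have h2 : dotv u u = 0 by rewrite {2}u0 dotv0r.
  by move: hu; rewrite h1 h2 expr2 !mulr0 addr0 => /eqP; rewrite eq_sym oner_eq0.
have hD := dotv_ge0 a.
have hN : (5 : R) <= n%:R by rewrite (ler_nat R 5 n).
have ht : 4 / s * dotv a a < 1.
  rewrite mulrAC ltr_pdivrMr // mul1r /s /sx; lra.
have hAt : dotv u u * (4 / s * dotv a a) < dotv u u.
  by rewrite -[X in _ < X]mulr1 ltr_pM2l.
have hAN : dotv u u * 5 <= dotv u u * n%:R by rewrite ler_pM2l.
have hB : 0 <= 4 * (4 / s * dotv u a ^+ 2).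
  by rewrite mulr_ge0 // mulr_ge0 ?sqr_ge0 // divr_ge0 // ltW.
have -> : 4 * (dotv u u - 4 / s * dotv u a ^+ 2) - dotv u u * (n%:R - 4 / s * dotv a a)
  = 4 * dotv u u - 4 * (4 / s * dotv u a ^+ 2) - dotv u u * n%:R + dotv u u * (4 / s * dotv a a).
  by ring.
clear term hu.
move: hAt hAN hB hA.
move: (dotv u u * (4 / s * dotv a a)) (dotv u u * n%:R) (4 * (4 / s * dotv u a ^+ 2)) (dotv u u).
move=> X Y B A; lra.
Qed.

Lemma CS q m (A : 'I_m -> 'rV[R]_q) :
  \sum_c \sum_b dotv (A c) (A b) <= m%:R * \sum_c dotv (A c) (A c).
Proof.
set S := \sum_c dotv (A c) (A c).
set T := \sum_c \sum_b dotv (A c) (A b).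
have H0 : 0 <= \sum_c \sum_b dotv (A c - A b) (A c - A b).
  by apply: sumr_ge0 => c _; apply: sumr_ge0 => b _; exact: dotv_ge0.
have E1 : \sum_c \sum_b dotv (A c - A b) (A c - A b) =
   \sum_c \sum_b (dotv (A c) (A c) + dotv (A b) (A b)) -
   \sum_c \sum_b (dotv (A c) (A b) + dotv (A b) (A c)).
  rewrite -sumrB; apply: eq_bigr => c _; rewrite -sumrB; apply: eq_bigr => b _.
  rewrite dotvBl !dotvBr; ring.
have E2 : \sum_c \sum_b (dotv (A c) (A c) + dotv (A b) (A b)) = 2 * (m%:R * S).
  have E2a : forall c, \sum_b (dotv (A c) (A c) + dotv (A b) (A b)) = dotv (A c) (A c) *+ m + S.
    by move=> c; rewrite big_split sumr_const card_ord.
  rewrite (eq_bigr _ (fun c _ => E2a c)) big_split sumrMnl sumr_const card_ord -/S.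
  apply: (@etrans _ _ (S *+ m + S *+ m)); first by [].
  rewrite -mulr_natl; ring.
have E3 : \sum_c \sum_b (dotv (A c) (A b) + dotv (A b) (A c)) = 2 * T.
  rewrite (eq_bigr _ (fun c _ => big_split _ _ _ _ _)) big_split.
  rewrite [X in _ + X = _]exchange_big -/T.
  apply: (@etrans _ _ (T + T)); first by [].
  ring.
rewrite E1 E2 E3 in H0; clear E1 E2 E3; move: H0; rewrite -/T; move: (m%:R * S) T => X Y; lra.
Qed.

Lemma onlyif_alg q m (hm : (0 < m)%N) (hm4 : (m <= 4)%N) (B : 'I_m -> 'I_m -> 'rV[R]_q) :
  ~ (forall c, \sum_b (4 * sqnorm (B c b) - dotv (B c c) (B b b)) < 0).
Proof.
move=> H.
have Hneg : \sum_c \sum_b (4 * sqnorm (B c b) - dotv (B c c) (B b b)) < 0.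
  rewrite -oppr_gt0 -sumrN lt_def psumr_neq0; last by move=> c _; rewrite oppr_ge0 ltW.
  rewrite sumr_ge0 ?andbT; last by move=> c _; rewrite oppr_ge0 ltW.
  apply/hasP; exists (Ordinal hm); first by rewrite mem_index_enum.
  by rewrite oppr_gt0 H.
set S := \sum_c dotv (B c c) (B c c).
have H1 : S <= \sum_c \sum_b sqnorm (B c b).
  apply: ler_sum => c _; rewrite (bigD1 c) //= lerDl.
  by apply: sumr_ge0 => b _; exact: dotv_ge0.
have H2 := CS (fun c => B c c).
have HS : 0 <= S by apply: sumr_ge0 => c _; exact: dotv_ge0.
have H3 : m%:R * S <= 4 * S by apply: ler_wpM2r => //; rewrite (ler_nat R m 4).
move: Hneg; rewrite (eq_bigr (fun c => 4 * \sum_b sqnorm (B c b) - \sum_b dotv (B c c) (B b b))); last first.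
  by move=> c _; rewrite sumrB mulr_sumr.
rewrite sumrB -mulr_sumr => Hneg.
have H4 : \sum_c \sum_b dotv (B c c) (B b b) <= 4 * \sum_c \sum_b sqnorm (B c b).
  apply: (le_trans H2); apply: (le_trans H3); apply: ler_wpM2l => //.
move: Hneg; rewrite -subr_ge0 in H4 => Hneg.
by move: (lt_le_trans Hneg H4); rewrite ltxx.
Qed.

Lemma gm0 n : gm (0 : 'rV[R]_n) = 1%:M.
Proof. by rewrite /gm trmx0 mul0mx scaler0 addr0. Qed.

Lemma dot_e n (c : 'I_n) : dotv (row c (1%:M : 'M[R]_n)) (row c 1%:M) = 1.
Proof. by rewrite row1 dotv_delta mxE !eqxx. Qed.

End S.

Theorem corollary5p1 (R : realType) (n : nat) (hn : (0 < n)%N) :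
  PhiSSU (@paraboloid R n) <-> (4 < n)%N.
Proof.
split; last exact: if_dir.
move=> [q [G [_ H]]]; rewrite ltnNge; apply/negP => hn4.
apply: (@onlyif_alg R q n hn hn4 (fun c b => sff G 0 (row c 1%:M) (row b 1%:M))) => c /=.
apply: H; rewrite gram_par gm0.
  by rewrite mulmx1 -/(dotv (row c 1%:M) (row c 1%:M)) dot_e.
by rewrite trmx1 !mulmx1.
Qed.
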